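(* For every $\delta>0$ there exist an unweighted congestion game $\mathcal{G}_1$ with quadratic latency functions and an unweighted congestion game $\mathcal{G}_2$ with cubic latency functions such that $\mathrm{PoS}(\mathcal{G}_1)\ge 2.1859-\delta$ and $\mathrm{PoS}(\mathcal{G}_2)\ge 2.7558-\delta$.
   Context: A weighted congestion game consists of a finite set $[n]=\{1,\dots,n\}$ of players, a finite set $E$ of resources, for each player $i$ a weight $w_i>0$ and a nonempty finite strategy set $\Sigma_i\subseteq 2^E$, and for each resource $e$ a latency function $\ell_e:\mathbb{R}_{\ge 0}\to\mathbb{R}_{\ge 0}$. It is unweighted if $w_i=1$ for all $i$. Quadratic (resp. cubic) latency functions means $\ell_e(x)=\sum_{j=0}^{d}\alpha_{e,j}x^j$ with all $\alpha_{e,j}\ge 0$ and $d=2$ (resp. $d=3$). For a strategy profile $S=(s_1,\dots,s_n)$, the congestion of $e$ is $L_e(S)=\sum_{i:\,e\in s_i}w_i$, the cost of player $i$ is $c_i(S)=\sum_{e\in s_i}\ell_e(L_e(S))$, and $\mathrm{SUM}(S)=\sum_i c_i(S)$; $S^*$ minimizes $\mathrm{SUM}$. A pure Nash equilibrium (PNE) is a profile $S$ with $c_i(S)\le c_i(S_{-i}\diamond t)$ for all $i$ and $t\in\Sigma_i$, where $(S_{-i}\diamond t)$ replaces $s_i$ by $t$. $\mathrm{PoS}(\mathcal{G})=\min_{S\ \mathrm{PNE}}\mathrm{SUM}(S)/\mathrm{SUM}(S^* )$. *)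

(* Defs.v *)
From Stdlib Require Import Reals List Arith.
Import ListNotations.
Open Scope R_scope.

Definition sumR (l : list R) : R := fold_right Rplus 0 l.

(* A weighted congestion game.  Players are 0..g_n-1, resources are 0..g_m-1.
   A strategy is a duplicate-free list of resources (representing a subset of E). *)
Record game := mkGame {
  g_n : nat;
  g_m : nat;
  g_w : nat -> R;
  g_strat : nat -> list (list nat);
  g_lat : nat -> R -> R
}.

Definition well_formed (G : game) : Prop :=
  forall i, (i < g_n G)%nat ->
    0 < g_w G i /\ g_strat G i <> [] /\
    forall s, In s (g_strat G i) -> NoDup s /\ forall e, In e s -> (e < g_m G)%nat.

Definition unweighted (G : game) : Prop :=
  forall i, (i < g_n G)%nat -> g_w G i = 1.

Definition poly_latency (d : nat) (l : R -> R) : Prop :=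
  exists a : nat -> R, (forall j, 0 <= a j) /\
    forall x, 0 <= x -> l x = sumR (map (fun j => a j * x ^ j) (seq 0 (S d))).

Definition poly_latencies (d : nat) (G : game) : Prop :=
  forall e, (e < g_m G)%nat -> poly_latency d (g_lat G e).

Definition profile := nat -> list nat.

Definition valid_profile (G : game) (S : profile) : Prop :=
  forall i, (i < g_n G)%nat -> In (S i) (g_strat G i).

Definition mem (e : nat) (s : list nat) : bool := existsb (Nat.eqb e) s.

Definition load (G : game) (S : profile) (e : nat) : R :=
  sumR (map (fun i => if mem e (S i) then g_w G i else 0) (seq 0 (g_n G))).

Definition cost (G : game) (S : profile) (i : nat) : R :=
  sumR (map (fun e => g_lat G e (load G S e)) (S i)).

Definition SUM (G : game) (S : profile) : R :=
  sumR (map (cost G S) (seq 0 (g_n G))).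

Definition deviate (S : profile) (i : nat) (t : list nat) : profile :=
  fun j => if Nat.eqb j i then t else S j.

Definition is_PNE (G : game) (S : profile) : Prop :=
  valid_profile G S /\
  forall i t, (i < g_n G)%nat -> In t (g_strat G i) -> cost G S i <= cost G (deviate S i t) i.

Definition is_optimum (G : game) (S : profile) : Prop :=
  valid_profile G S /\ forall S', valid_profile G S' -> SUM G S <= SUM G S'.

(* p is the price of stability of G: the optimum social cost is positive
   (so the ratio is defined), and p = min over PNE S of SUM(S)/SUM(Sopt). *)
Definition is_PoS (G : game) (p : R) : Prop :=
  exists Sopt, is_optimum G Sopt /\ 0 < SUM G Sopt /\
  (exists S, is_PNE G S /\ p = SUM G S / SUM G Sopt) /\
  (forall S, is_PNE G S -> p <= SUM G S / SUM G Sopt).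

(* Main.v *)
Require Import Defs.
From Stdlib Require Import Reals List Arith ZArith Lia Lra Bool.
Import ListNotations.
Open Scope R_scope.


Definition Zsum (l : list Z) : Z := fold_right Z.add 0%Z l.
Definition Nsum (l : list nat) : nat := fold_right Nat.add 0%nat l.

Record gdata := mkD { dn : nat; dm : nat; dd : nat;
  dU : list (list (nat * bool)); dC : list (list Z) }.

Definition users (D : gdata) e := nth e (dU D) [].
Definition inU (D : gdata) e i s :=
  existsb (fun p => Nat.eqb (fst p) i && Bool.eqb (snd p) s) (users D e).
Definition strat (D : gdata) i s := filter (fun e => inU D e i s) (seq 0 (dm D)).
Definition coef (D : gdata) e j := nth j (nth e (dC D) []) 0%Z.
Definition latR (D : gdata) e (x : R) :=
  sumR (map (fun j => IZR (coef D e j) * x ^ j) (seq 0 (S (dd D)))).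
Definition G_of (D : gdata) : game :=
  mkGame (dn D) (dm D) (fun _ => 1) (fun i => [strat D i false; strat D i true]) (latR D).

Definition latZ (D : gdata) e (x : Z) : Z :=
  Zsum (map (fun j => coef D e j * x ^ Z.of_nat j)%Z (seq 0 (S (dd D)))).
Definition loadN (D : gdata) (v : list bool) e : nat :=
  Nsum (map (fun i => if inU D e i (nth i v false) then 1%nat else 0%nat) (seq 0 (dn D))).
Definition costZ (D : gdata) v i : Z :=
  Zsum (map (fun e => latZ D e (Z.of_nat (loadN D v e))) (strat D i (nth i v false))).
Definition sumZ (D : gdata) v : Z := Zsum (map (costZ D v) (seq 0 (dn D))).

Fixpoint allbools (r : nat) : list (list bool) :=
  match r with
  | O => [[]]
  | S r => map (cons false) (allbools r) ++ map (cons true) (allbools r)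
  end.

Definition dom_check (D : gdata) : bool :=
  forallb (fun k => forallb (fun rest =>
     Z.ltb (costZ D (repeat true k ++ true :: rest) k) (costZ D (repeat true k ++ false :: rest) k))
     (allbools (dn D - S k))) (seq 0 (dn D)).
Definition pos_check (D : gdata) : bool :=
  forallb (fun v => Z.ltb 0 (sumZ D v)) (allbools (dn D)).
Definition coef_check (D : gdata) : bool := forallb (forallb (Z.leb 0)) (dC D).

Lemma sumR_IZR (A : Type) (f : A -> Z) (l : list A) :
  sumR (map (fun x => IZR (f x)) l) = IZR (Zsum (map f l)).
Proof. induction l as [|a l IH]; simpl; [reflexivity|]. rewrite IH, plus_IZR; reflexivity. Qed.

Lemma sumR_INR (A : Type) (f : A -> nat) (l : list A) :
  sumR (map (fun x => INR (f x)) l) = INR (Nsum (map f l)).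
Proof. induction l as [|a l IH]; simpl; [reflexivity|]. rewrite IH, plus_INR; reflexivity. Qed.

Lemma sumR_ext (A : Type) (f g : A -> R) (l : list A) :
  (forall x, In x l -> f x = g x) -> sumR (map f l) = sumR (map g l).
Proof. intro H. f_equal. apply map_ext_in. exact H. Qed.

Lemma latR_eq D e k : latR D e (INR k) = IZR (latZ D e (Z.of_nat k)).
Proof.
  unfold latR, latZ. rewrite <- sumR_IZR. apply sumR_ext. intros j _.
  rewrite mult_IZR, <- pow_IZR, INR_IZR_INZ. reflexivity.
Qed.

Lemma mem_In e l : mem e l = true <-> In e l.
Proof.
  unfold mem. rewrite existsb_exists. split.
  - intros [x [Hx Hb]]. apply Nat.eqb_eq in Hb. subst; exact Hx.
  - intros H. exists e. split; [exact H| apply Nat.eqb_refl].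
Qed.

Lemma mem_strat D e i s : (e < dm D)%nat -> mem e (strat D i s) = inU D e i s.
Proof.
  intro He. destruct (mem e (strat D i s)) eqn:E; symmetry.
  - apply mem_In in E. unfold strat in E. apply filter_In in E. tauto.
  - destruct (inU D e i s) eqn:F; [|reflexivity].
    assert (In e (strat D i s)). { unfold strat. apply filter_In. split; [apply in_seq; lia| exact F]. }
    apply mem_In in H. congruence.
Qed.

Lemma strat_lt D i s e : In e (strat D i s) -> (e < dm D)%nat.
Proof. unfold strat. intro H. apply filter_In in H. destruct H as [H _]. apply in_seq in H. lia. Qed.

Definition rel (D : gdata) (S : profile) (v : list bool) :=
  forall i, (i < dn D)%nat -> S i = strat D i (nth i v false).

Lemma load_eq D S v e : rel D S v -> (e < dm D)%nat -> load (G_of D) S e = INR (loadN D v e).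
Proof.
  intros HR He. unfold load, loadN. rewrite <- sumR_INR. simpl. apply sumR_ext.
  intros i Hi. apply in_seq in Hi. rewrite HR by lia. rewrite mem_strat by exact He.
  destruct (inU D e i (nth i v false)); reflexivity.
Qed.

Lemma cost_eq D S v i : rel D S v -> (i < dn D)%nat -> cost (G_of D) S i = IZR (costZ D v i).
Proof.
  intros HR Hi. unfold cost, costZ. rewrite <- sumR_IZR. rewrite (HR i Hi). apply sumR_ext.
  intros e He. simpl. rewrite (load_eq D S v e HR (strat_lt _ _ _ _ He)). apply latR_eq.
Qed.

Lemma SUM_eq D S v : rel D S v -> SUM (G_of D) S = IZR (sumZ D v).
Proof.
  intros HR. unfold SUM, sumZ. rewrite <- sumR_IZR. apply sumR_ext.
  intros i Hi. apply in_seq in Hi. apply cost_eq; [exact HR| simpl in Hi; lia].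
Qed.

Lemma allbools_complete r l : length l = r -> In l (allbools r).
Proof.
  revert l. induction r as [|r IH]; intros l Hl.
  - destruct l; [left; reflexivity | discriminate].
  - destruct l as [|b l]; [discriminate|]. simpl in Hl. injection Hl as Hl.
    simpl. apply in_or_app. destruct b; [right|left]; apply in_map; apply IH; exact Hl.
Qed.

Lemma allbools_len r l : In l (allbools r) -> length l = r.
Proof.
  revert l. induction r as [|r IH]; intros l Hl; simpl in Hl.
  - destruct Hl as [<-|[]]; reflexivity.
  - apply in_app_or in Hl. destruct Hl as [H|H]; apply in_map_iff in H; destruct H as [x [<- Hx]];
    simpl; f_equal; apply IH; exact Hx.
Qed.

Definition vec (D : gdata) (S : profile) : list bool :=
  map (fun i => if list_eq_dec Nat.eq_dec (S i) (strat D i true) then true else false) (seq 0 (dn D)).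

Lemma vec_len D S : length (vec D S) = dn D.
Proof. unfold vec. rewrite length_map, length_seq. reflexivity. Qed.

Lemma vec_rel D S : valid_profile (G_of D) S -> rel D S (vec D S).
Proof.
  intros HV i Hi. unfold vec.
  set (f := fun i => if list_eq_dec Nat.eq_dec (S i) (strat D i true) then true else false).
  rewrite nth_indep with (d' := f 0%nat) by (rewrite length_map, length_seq; exact Hi).
  rewrite map_nth, seq_nth by exact Hi. unfold f. simpl.
  destruct (list_eq_dec Nat.eq_dec (S i) (strat D i true)) as [E|E]; [exact E|].
  specialize (HV i Hi). simpl in HV. destruct HV as [H|[H|[]]]; congruence.
Qed.

Definition pos0_check (D : gdata) : bool :=
  forallb (fun v => Z.ltb 0 (costZ D v 0)) (allbools (dn D)).

Lemma Zsum_nonneg (A : Type) (f : A -> Z) l : (forall x, In x l -> (0 <= f x)%Z) -> (0 <= Zsum (map f l))%Z.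
Proof.
  induction l as [|a l IH]; intro H; simpl; [lia|].
  assert (0 <= f a)%Z by (apply H; left; reflexivity).
  assert (0 <= Zsum (map f l))%Z by (apply IH; intros; apply H; right; assumption). lia.
Qed.

Lemma coef_nonneg' D e j : coef_check D = true -> (0 <= coef D e j)%Z.
Proof.
  intro H. unfold coef. unfold coef_check in H. rewrite forallb_forall in H.
  destruct (Nat.lt_ge_cases e (length (dC D))) as [He|He].
  - pose proof (H _ (nth_In _ [] He)) as H1. rewrite forallb_forall in H1.
    destruct (Nat.lt_ge_cases j (length (nth e (dC D) []))) as [Hj|Hj].
    + specialize (H1 _ (nth_In _ 0%Z Hj)). apply Z.leb_le in H1. exact H1.
    + rewrite nth_overflow by exact Hj. lia.
  - rewrite (nth_overflow (dC D)) by exact He. destruct j; simpl; lia.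
Qed.

Lemma costZ_nonneg D v i : coef_check D = true -> (0 <= costZ D v i)%Z.
Proof.
  intro H. unfold costZ. apply Zsum_nonneg. intros e _. unfold latZ. apply Zsum_nonneg.
  intros j _. apply Z.mul_nonneg_nonneg; [apply coef_nonneg'; exact H|]. apply Z.pow_nonneg. lia.
Qed.

Lemma pos0_sound D v : coef_check D = true -> pos0_check D = true -> (0 < dn D)%nat -> length v = dn D -> (0 < sumZ D v)%Z.
Proof.
  intros Hc H Hn Hl. unfold pos0_check in H. rewrite forallb_forall in H.
  specialize (H v (allbools_complete _ _ Hl)). apply Z.ltb_lt in H.
  unfold sumZ. destruct (dn D) as [|n'] eqn:E; [lia|]. simpl.
  assert (0 <= Zsum (map (costZ D v) (seq 1 n')))%Z by (apply Zsum_nonneg; intros; apply costZ_nonneg; exact Hc).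
  lia.
Qed.

Lemma nth_pref (k i : nat) (b : bool) (rest : list bool) :
  nth i (repeat true k ++ b :: rest) false =
  if (i <? k)%nat then true else if (i =? k)%nat then b else nth (i - S k) rest false.
Proof.
  destruct (i <? k)%nat eqn:E1.
  - apply Nat.ltb_lt in E1. rewrite app_nth1 by (rewrite repeat_length; exact E1).
    apply nth_repeat_lt; exact E1.
  - apply Nat.ltb_ge in E1. rewrite app_nth2 by (rewrite repeat_length; exact E1).
    rewrite repeat_length. destruct (i =? k)%nat eqn:E2.
    + apply Nat.eqb_eq in E2. subst. rewrite Nat.sub_diag. reflexivity.
    + apply Nat.eqb_neq in E2. destruct (i - k)%nat eqn:E3; [lia|]. simpl. f_equal. lia.
Qed.

Lemma dom_sound D k rest : dom_check D = true -> (k < dn D)%nat -> length rest = (dn D - S k)%nat ->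
  (costZ D (repeat true k ++ true :: rest) k < costZ D (repeat true k ++ false :: rest) k)%Z.
Proof.
  intros H Hk Hl. unfold dom_check in H. rewrite forallb_forall in H.
  specialize (H k (proj2 (in_seq _ _ _) (conj (Nat.le_0_l _) Hk))).
  rewrite forallb_forall in H. specialize (H rest (allbools_complete _ _ Hl)).
  apply Z.ltb_lt in H. exact H.
Qed.

Lemma strat_in D i s : In (strat D i s) (g_strat (G_of D) i).
Proof. destruct s; simpl; tauto. Qed.

Lemma PNE_allB D S : dom_check D = true -> is_PNE (G_of D) S ->
  forall k, (k < dn D)%nat -> S k = strat D k true.
Proof.
  intros HC [HV HP]. intro k. induction k as [k IH] using (well_founded_induction lt_wf).
  intro Hk.
  destruct (list_eq_dec Nat.eq_dec (S k) (strat D k true)) as [E|E]; [exact E|exfalso].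
  assert (HG : S k = strat D k false).
  { specialize (HV k Hk). simpl in HV. destruct HV as [H|[H|[]]]; congruence. }
  set (v := vec D S).
  set (rest := skipn (Datatypes.S k) v).
  assert (Hlen : length rest = (dn D - Datatypes.S k)%nat).
  { unfold rest, v. rewrite length_skipn, vec_len. reflexivity. }
  assert (HR : rel D S (repeat true k ++ false :: rest)).
  { intros i Hi. rewrite nth_pref.
    destruct (i <? k)%nat eqn:E1; [apply Nat.ltb_lt in E1; apply IH; lia|].
    destruct (i =? k)%nat eqn:E2; [apply Nat.eqb_eq in E2; subst; exact HG|].
    apply Nat.ltb_ge in E1. apply Nat.eqb_neq in E2.
    unfold rest. rewrite nth_skipn. replace (Datatypes.S k + (i - Datatypes.S k))%nat with i by lia.
    apply vec_rel; assumption. }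
  set (S' := deviate S k (strat D k true)).
  assert (HR' : rel D S' (repeat true k ++ true :: rest)).
  { intros i Hi. unfold S', deviate. rewrite nth_pref.
    destruct (i =? k)%nat eqn:E2.
    - apply Nat.eqb_eq in E2. subst. destruct (_ <? _)%nat; reflexivity.
    - destruct (i <? k)%nat eqn:E1; [apply Nat.ltb_lt in E1; apply IH; lia|].
      apply Nat.ltb_ge in E1. apply Nat.eqb_neq in E2.
      unfold rest. rewrite nth_skipn. replace (Datatypes.S k + (i - Datatypes.S k))%nat with i by lia.
      apply vec_rel; assumption. }
  pose proof (HP k (strat D k true) Hk (strat_in D k true)) as HPk.
  fold S' in HPk.
  rewrite (cost_eq D S _ k HR Hk), (cost_eq D S' _ k HR' Hk) in HPk.
  pose proof (dom_sound D k rest HC Hk Hlen) as HD.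
  apply IZR_lt in HD. lra.
Qed.

Definition SB (D : gdata) : profile := fun i => strat D i true.
Definition SG (D : gdata) : profile := fun i => strat D i false.

Lemma rel_const D b : rel D (fun i => strat D i b) (repeat b (dn D)).
Proof. intros i Hi. rewrite nth_repeat_lt by (rewrite ?repeat_length; lia). reflexivity. Qed.

Lemma valid_const D b : valid_profile (G_of D) (fun i => strat D i b).
Proof. intros i _. apply strat_in. Qed.

Lemma SB_PNE D : dom_check D = true -> is_PNE (G_of D) (SB D).
Proof.
  intro HC. split; [apply valid_const|].
  intros i t Hi Ht. simpl in Ht.
  set (rest := repeat true (dn D - Datatypes.S i)).
  assert (Hlen : length rest = (dn D - Datatypes.S i)%nat) by apply repeat_length.
  assert (HR : rel D (SB D) (repeat true i ++ true :: rest)).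
  { intros j Hj. unfold SB. rewrite nth_pref.
    destruct (j <? i)%nat eqn:E1; [reflexivity|]. destruct (j =? i)%nat eqn:E2; [reflexivity|].
    apply Nat.ltb_ge in E1. apply Nat.eqb_neq in E2.
    unfold rest. rewrite nth_repeat_lt by lia. reflexivity. }
  destruct Ht as [Ht|[Ht|[]]]; subst t.
  - assert (HR' : rel D (deviate (SB D) i (strat D i false)) (repeat true i ++ false :: rest)).
    { intros j Hj. unfold deviate, SB. rewrite nth_pref.
      destruct (j =? i)%nat eqn:E2.
      - apply Nat.eqb_eq in E2; subst. rewrite Nat.ltb_irrefl. reflexivity.
      - destruct (j <? i)%nat eqn:E1; [reflexivity|]. apply Nat.ltb_ge in E1. apply Nat.eqb_neq in E2.
        unfold rest. rewrite nth_repeat_lt by lia. reflexivity. }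
    rewrite (cost_eq D _ _ i HR Hi), (cost_eq D _ _ i HR' Hi).
    left. apply IZR_lt. apply dom_sound; assumption.
  - assert (HR' : rel D (deviate (SB D) i (strat D i true)) (repeat true i ++ true :: rest)).
    { intros j Hj. unfold deviate. destruct (j =? i)%nat eqn:E2.
      - apply Nat.eqb_eq in E2; subst. rewrite nth_pref, Nat.ltb_irrefl, Nat.eqb_refl. reflexivity.
      - apply HR; exact Hj. }
    rewrite (cost_eq D _ _ i HR Hi), (cost_eq D _ _ i HR' Hi). lra.
Qed.

Lemma min_exists (A : Type) (f : A -> Z) (l : list A) (a : A) : In a l ->
  exists a0, In a0 l /\ forall x, In x l -> (f a0 <= f x)%Z.
Proof.
  revert a. induction l as [|b l IH]; intros a Ha; [destruct Ha|].
  destruct l as [|c l'].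
  - exists b. split; [left; reflexivity|]. intros x [<-|[]]. lia.
  - destruct (IH c (or_introl eq_refl)) as [a0 [Ha0 Hm]].
    destruct (Z.le_gt_cases (f b) (f a0)) as [Hb|Hb].
    + exists b. split; [left; reflexivity|]. intros x [<-|Hx]; [lia|]. specialize (Hm x Hx). lia.
    + exists a0. split; [right; exact Ha0|]. intros x [<-|Hx]; [lia|]. apply Hm; exact Hx.
Qed.

Lemma pos_sound D v : pos_check D = true -> length v = dn D -> (0 < sumZ D v)%Z.
Proof.
  intros H Hl. unfold pos_check in H. rewrite forallb_forall in H.
  specialize (H v (allbools_complete _ _ Hl)). apply Z.ltb_lt in H. exact H.
Qed.

Theorem framework D (r : R) : dom_check D = true -> coef_check D = true -> pos0_check D = true -> (0 < dn D)%nat ->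
  0 <= r -> r * IZR (sumZ D (repeat false (dn D))) <= IZR (sumZ D (repeat true (dn D))) ->
  exists p, is_PoS (G_of D) p /\ r <= p.
Proof.
  intros HC Hc HP Hn Hr Hratio.
  destruct (min_exists _ (sumZ D) (allbools (dn D)) (repeat false (dn D))
    (allbools_complete _ _ (repeat_length _ _))) as [v0 [Hv0 Hmin]].
  set (So := fun i => strat D i (nth i v0 false)).
  assert (HRo : rel D So v0) by (intros i _; reflexivity).
  assert (Hpos : 0 < SUM (G_of D) So).
  { rewrite (SUM_eq D So v0 HRo). apply IZR_lt. apply pos0_sound; [exact Hc|exact HP|exact Hn| apply allbools_len; exact Hv0]. }
  assert (Hopt : is_optimum (G_of D) So).
  { split; [intros i _; apply strat_in|].
    intros S' HV'. rewrite (SUM_eq D So v0 HRo), (SUM_eq D S' (vec D S') (vec_rel D S' HV')).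
    apply IZR_le. apply Hmin. apply allbools_complete. apply vec_len. }
  assert (HPS : forall S, is_PNE (G_of D) S -> SUM (G_of D) S = IZR (sumZ D (repeat true (dn D)))).
  { intros S HS. apply SUM_eq. intros i Hi. rewrite nth_repeat_lt by (rewrite ?repeat_length; lia).
    apply PNE_allB; assumption. }
  assert (HGe : SUM (G_of D) So <= IZR (sumZ D (repeat false (dn D)))).
  { rewrite <- (SUM_eq D _ _ (rel_const D false)). apply Hopt. apply valid_const. }
  exists (IZR (sumZ D (repeat true (dn D))) / SUM (G_of D) So). split.
  - exists So. split; [exact Hopt|]. split; [exact Hpos|]. split.
    + exists (SB D). split; [apply SB_PNE; exact HC|]. rewrite (HPS (SB D)) by (apply SB_PNE; exact HC). reflexivity.
    + intros S HS. rewrite (HPS S HS). lra.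
  - apply Rmult_le_reg_r with (SUM (G_of D) So); [exact Hpos|].
    unfold Rdiv. rewrite Rmult_assoc, Rinv_l by lra. rewrite Rmult_1_r.
    apply Rle_trans with (r * IZR (sumZ D (repeat false (dn D)))); [|exact Hratio].
    apply Rmult_le_compat_l; assumption.
Qed.

Lemma G_wf D : well_formed (G_of D).
Proof.
  intros i _. split; [simpl; lra|]. split; [discriminate|].
  intros s Hs. simpl in Hs.
  assert (H : exists b, s = strat D i b) by (destruct Hs as [H|[H|[]]]; eexists; symmetry; exact H).
  destruct H as [b ->]. split.
  - unfold strat. apply NoDup_filter, seq_NoDup.
  - intros e He. apply (strat_lt D i b e He).
Qed.

Lemma G_unw D : unweighted (G_of D).
Proof. intros i _. reflexivity. Qed.

Lemma coef_nonneg D e j : coef_check D = true -> (0 <= coef D e j)%Z.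
Proof.
  intro H. unfold coef. unfold coef_check in H. rewrite forallb_forall in H.
  destruct (Nat.lt_ge_cases e (length (dC D))) as [He|He].
  - pose proof (H _ (nth_In _ [] He)) as H1. rewrite forallb_forall in H1.
    destruct (Nat.lt_ge_cases j (length (nth e (dC D) []))) as [Hj|Hj].
    + specialize (H1 _ (nth_In _ 0%Z Hj)). apply Z.leb_le in H1. exact H1.
    + rewrite nth_overflow by exact Hj. lia.
  - rewrite (nth_overflow (dC D)) by exact He. destruct j; simpl; lia.
Qed.

Lemma G_poly D : coef_check D = true -> poly_latencies (dd D) (G_of D).
Proof.
  intros H e _. exists (fun j => IZR (coef D e j)). split.
  - intro j. apply IZR_le. apply coef_nonneg; exact H.
  - intros x _. reflexivity.
Qed.
Definition D2 : gdata := mkD 11 100 2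
  ([[(0,false); (1,false); (2,true); (3,true); (4,true); (5,true); (6,true); (7,true); (8,true); (9,true); (10,true)];
  [(0,false); (1,true); (2,true); (3,true); (4,false); (5,true); (6,true); (7,true); (8,true); (9,true); (10,true)];
  [(0,false); (1,true); (2,true); (3,true); (4,true); (5,false); (6,true); (7,true); (8,true); (9,true); (10,true)];
  [(0,false); (1,true); (2,true); (3,true); (4,true); (5,true); (6,false); (7,true); (8,true); (9,true); (10,true)];
  [(0,false); (1,true); (2,true); (3,true); (4,true); (5,true); (6,true); (7,false); (8,true); (9,true); (10,true)];
  [(0,false); (1,true); (2,true); (3,true); (4,true); (5,true); (6,true); (7,true); (8,true); (9,true); (10,false)];
  [(0,false); (2,false)];
  [(0,false); (2,true)];
  [(0,false); (3,true)];
  [(0,false); (4,true)];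
  [(0,false); (5,true)];
  [(0,false); (7,true)];
  [(0,false); (9,true)];
  [(0,true); (1,false); (2,true); (3,true); (4,false); (5,true); (6,true); (7,true); (8,true); (9,true); (10,true)];
  [(0,true); (1,false); (2,true); (3,true); (4,true); (5,false); (6,true); (7,true); (8,true); (9,true); (10,true)];
  [(0,true); (1,false); (2,true); (3,true); (4,true); (5,true); (6,false); (7,true); (8,true); (9,true); (10,true)];
  [(0,true); (1,false); (2,true); (3,true); (4,true); (5,true); (6,true); (7,false); (8,true); (9,true); (10,true)];
  [(0,true); (1,false); (2,true); (3,true); (4,true); (5,true); (6,true); (7,true); (8,false); (9,true); (10,true)];
  [(0,true); (1,false); (2,true); (3,true); (4,true); (5,true); (6,true); (7,true); (8,true); (9,true); (10,false)];
  [(0,true); (1,false)];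
  [(0,true); (1,true); (2,true); (3,false); (4,true); (5,true); (6,true); (7,true); (8,true); (9,false); (10,true)];
  [(0,true); (1,true); (2,true); (3,false); (4,true); (5,true); (6,true); (7,true); (8,true); (9,true); (10,false)];
  [(0,true); (1,true); (2,true); (3,true); (4,false); (5,false); (6,true); (7,true); (8,true); (9,true); (10,true)];
  [(0,true); (1,true); (2,true); (3,true); (4,false); (5,true); (6,false); (7,true); (8,true); (9,true); (10,true)];
  [(0,true); (1,true); (2,true); (3,true); (4,false); (5,true); (6,true); (7,false); (8,true); (9,true); (10,true)];
  [(0,true); (1,true); (2,true); (3,true); (4,false); (5,true); (6,true); (7,true); (8,false); (9,true); (10,true)];
  [(0,true); (1,true); (2,true); (3,true); (4,false); (5,true); (6,true); (7,true); (8,true); (9,false); (10,true)];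
  [(0,true); (1,true); (2,true); (3,true); (4,false); (5,true); (6,true); (7,true); (8,true); (9,true); (10,false)];
  [(0,true); (1,true); (2,true); (3,true); (4,true); (5,false); (6,false); (7,true); (8,true); (9,true); (10,true)];
  [(0,true); (1,true); (2,true); (3,true); (4,true); (5,false); (6,true); (7,true); (8,false); (9,true); (10,true)];
  [(0,true); (1,true); (2,true); (3,true); (4,true); (5,false); (6,true); (7,true); (8,true); (9,false); (10,true)];
  [(0,true); (1,true); (2,true); (3,true); (4,true); (5,false); (6,true); (7,true); (8,true); (9,true); (10,false)];
  [(0,true); (1,true); (2,true); (3,true); (4,true); (5,true); (6,false); (7,false); (8,true); (9,true); (10,true)];
  [(0,true); (1,true); (2,true); (3,true); (4,true); (5,true); (6,false); (7,true); (8,false); (9,true); (10,true)];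
  [(0,true); (1,true); (2,true); (3,true); (4,true); (5,true); (6,false); (7,true); (8,true); (9,false); (10,true)];
  [(0,true); (1,true); (2,true); (3,true); (4,true); (5,true); (6,false); (7,true); (8,true); (9,true); (10,false)];
  [(0,true); (1,true); (2,true); (3,true); (4,true); (5,true); (6,true); (7,false); (8,true); (9,true); (10,false)];
  [(0,true); (1,true); (2,true); (3,true); (4,true); (5,true); (6,true); (7,true); (8,false); (9,false); (10,true)];
  [(0,true); (1,true); (2,true); (3,true); (4,true); (5,true); (6,true); (7,true); (8,false); (9,true); (10,false)];
  [(0,true); (1,true); (2,true); (3,true); (4,true); (5,true); (6,true); (7,true); (8,true); (9,false); (10,false)];
  [(0,true); (2,false)];
  [(0,true); (4,false)];
  [(0,true); (6,false)];
  [(0,true); (8,false)];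
  [(0,true); (10,false)];
  [(1,false); (2,true)];
  [(1,false); (3,true)];
  [(1,false); (4,true)];
  [(1,false); (5,true)];
  [(1,false); (6,true)];
  [(1,false); (7,true)];
  [(1,false); (8,true)];
  [(1,false); (9,true)];
  [(1,true); (8,false)];
  [(1,true); (10,false)];
  [(2,false); (3,true)];
  [(2,false); (5,true)];
  [(2,false); (6,true)];
  [(2,false); (7,true)];
  [(2,false); (9,true)];
  [(2,false); (10,true)];
  [(2,true); (4,false)];
  [(2,true); (8,false)];
  [(2,true); (10,false)];
  [(3,false); (4,true)];
  [(3,false); (9,false)];
  [(3,false); (9,true)];
  [(3,true); (5,false)];
  [(3,true); (6,false)];
  [(3,true); (7,false)];
  [(3,true); (8,false)];
  [(3,true); (10,false)];
  [(4,false); (7,false)];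
  [(4,false); (8,true)];
  [(4,true); (5,false)];
  [(4,true); (6,false)];
  [(4,true); (7,false)];
  [(4,true); (8,false)];
  [(4,true); (9,false)];
  [(4,true); (10,false)];
  [(5,false); (6,false)];
  [(5,false); (6,true)];
  [(5,false); (9,true)];
  [(5,true); (7,false)];
  [(5,true); (8,false)];
  [(5,true); (9,false)];
  [(5,true); (10,false)];
  [(6,false); (9,true)];
  [(6,true); (7,false)];
  [(6,true); (8,false)];
  [(6,true); (9,false)];
  [(6,true); (10,false)];
  [(7,false); (9,true)];
  [(7,true); (8,false)];
  [(7,true); (10,false)];
  [(8,false); (9,true)];
  [(8,true); (10,false)];
  [(9,true); (10,false)];
  [(4,false)];
  [(6,false)]])%nat
  ([[0; 0; 47946];
  [0; 0; 48219];
  [0; 0; 73854];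
  [0; 0; 38850];
  [0; 0; 245696];
  [0; 0; 27670];
  [55569723; 0; 0];
  [0; 0; 384683];
  [0; 0; 6479156];
  [0; 0; 68803];
  [0; 0; 3526568];
  [0; 0; 8463023];
  [0; 0; 3709665];
  [0; 0; 110591];
  [0; 0; 54173];
  [0; 0; 129128];
  [0; 0; 29191];
  [0; 0; 201523];
  [0; 0; 137952];
  [0; 0; 2079183];
  [0; 0; 223608];
  [0; 0; 22270];
  [0; 0; 141782];
  [0; 0; 132731];
  [0; 0; 44373];
  [0; 0; 83737];
  [0; 0; 19576];
  [0; 0; 105442];
  [0; 0; 58702];
  [0; 0; 26826];
  [0; 0; 78815];
  [0; 0; 106644];
  [0; 0; 45929];
  [0; 0; 140756];
  [0; 0; 31634];
  [0; 0; 100311];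
  [0; 0; 40945];
  [0; 0; 11442];
  [0; 0; 117154];
  [0; 0; 17946];
  [0; 0; 4068982];
  [0; 0; 2155272];
  [0; 0; 2167414];
  [0; 0; 2509956];
  [0; 0; 2072172];
  [0; 0; 4366182];
  [0; 0; 3602827];
  [0; 0; 1312196];
  [0; 0; 1600091];
  [0; 0; 1859257];
  [0; 0; 2613880];
  [0; 0; 3801529];
  [0; 0; 1738995];
  [0; 0; 42114];
  [0; 0; 2126758];
  [0; 0; 9884034];
  [0; 0; 5028978];
  [0; 0; 6547356];
  [0; 0; 6852724];
  [0; 0; 7259502];
  [0; 0; 5983793];
  [0; 0; 7036607];
  [0; 0; 7041737];
  [0; 0; 913150];
  [0; 0; 3750041];
  [171769559; 0; 0];
  [0; 0; 8338206];
  [0; 0; 5833942];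
  [0; 0; 3881409];
  [0; 0; 6896621];
  [0; 0; 5301905];
  [0; 0; 4417751];
  [76278910; 0; 0];
  [0; 0; 400423];
  [0; 0; 3732975];
  [0; 0; 2129197];
  [0; 0; 3287124];
  [0; 0; 1758727];
  [0; 0; 2936278];
  [0; 0; 1591792];
  [73740298; 0; 0];
  [0; 0; 2135091];
  [0; 0; 5107771];
  [0; 0; 3910872];
  [0; 0; 2486810];
  [0; 0; 678452];
  [0; 0; 3302918];
  [0; 0; 2306585];
  [0; 0; 3404757];
  [0; 0; 3554973];
  [0; 0; 1011276];
  [0; 0; 1562735];
  [0; 0; 5804167];
  [0; 0; 3423167];
  [0; 0; 3321677];
  [0; 0; 3990389];
  [0; 0; 3148668];
  [0; 0; 3016392];
  [93; 0; 0];
  [14; 0; 0]])%Z.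
Definition D3 : gdata := mkD 9 82 3
  ([[(0,false); (1,false); (2,true); (3,true); (4,true); (5,true); (6,true); (7,true); (8,true)];
  [(0,false); (1,true); (2,false); (3,true); (4,true); (5,true); (6,true); (7,true); (8,true)];
  [(0,false); (1,true); (2,true); (3,false); (4,true); (5,true); (6,true); (7,true); (8,true)];
  [(0,false); (1,true); (2,true); (3,true); (4,false); (5,true); (6,true); (7,true); (8,true)];
  [(0,false); (1,true); (2,true); (3,true); (4,true); (5,false); (6,true); (7,true); (8,true)];
  [(0,false); (1,true); (2,true); (3,true); (4,true); (5,true); (6,false); (7,true); (8,true)];
  [(0,false); (1,true); (2,true); (3,true); (4,true); (5,true); (6,true); (7,false); (8,true)];
  [(0,false); (1,true); (2,true); (3,true); (4,true); (5,true); (6,true); (7,true); (8,false)];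
  [(0,false); (3,true)];
  [(0,false); (6,true)];
  [(0,false); (8,false)];
  [(0,true); (1,false); (2,false); (3,true); (4,true); (5,true); (6,true); (7,true); (8,true)];
  [(0,true); (1,false); (2,true); (3,false); (4,true); (5,true); (6,true); (7,true); (8,true)];
  [(0,true); (1,false); (2,true); (3,true); (4,false); (5,true); (6,true); (7,true); (8,true)];
  [(0,true); (1,false); (2,true); (3,true); (4,true); (5,false); (6,true); (7,true); (8,true)];
  [(0,true); (1,false); (2,true); (3,true); (4,true); (5,true); (6,false); (7,true); (8,true)];
  [(0,true); (1,false); (2,true); (3,true); (4,true); (5,true); (6,true); (7,false); (8,true)];
  [(0,true); (1,false); (2,true); (3,true); (4,true); (5,true); (6,true); (7,true); (8,false)];
  [(0,true); (1,false)];
  [(0,true); (1,true); (2,false); (3,false); (4,true); (5,true); (6,true); (7,true); (8,true)];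
  [(0,true); (1,true); (2,false); (3,true); (4,false); (5,true); (6,true); (7,true); (8,true)];
  [(0,true); (1,true); (2,false); (3,true); (4,true); (5,false); (6,true); (7,true); (8,true)];
  [(0,true); (1,true); (2,false); (3,true); (4,true); (5,true); (6,false); (7,true); (8,true)];
  [(0,true); (1,true); (2,false); (3,true); (4,true); (5,true); (6,true); (7,false); (8,true)];
  [(0,true); (1,true); (2,false); (3,true); (4,true); (5,true); (6,true); (7,true); (8,false)];
  [(0,true); (1,true); (2,true); (3,false); (4,false); (5,true); (6,true); (7,true); (8,true)];
  [(0,true); (1,true); (2,true); (3,false); (4,true); (5,false); (6,true); (7,true); (8,true)];
  [(0,true); (1,true); (2,true); (3,false); (4,true); (5,true); (6,false); (7,true); (8,true)];
  [(0,true); (1,true); (2,true); (3,false); (4,true); (5,true); (6,true); (7,false); (8,true)];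
  [(0,true); (1,true); (2,true); (3,false); (4,true); (5,true); (6,true); (7,true); (8,false)];
  [(0,true); (1,true); (2,true); (3,true); (4,false); (5,false); (6,true); (7,true); (8,true)];
  [(0,true); (1,true); (2,true); (3,true); (4,false); (5,true); (6,false); (7,true); (8,true)];
  [(0,true); (1,true); (2,true); (3,true); (4,false); (5,true); (6,true); (7,false); (8,true)];
  [(0,true); (1,true); (2,true); (3,true); (4,false); (5,true); (6,true); (7,true); (8,false)];
  [(0,true); (1,true); (2,true); (3,true); (4,true); (5,false); (6,false); (7,true); (8,true)];
  [(0,true); (1,true); (2,true); (3,true); (4,true); (5,false); (6,true); (7,false); (8,true)];
  [(0,true); (1,true); (2,true); (3,true); (4,true); (5,false); (6,true); (7,true); (8,false)];
  [(0,true); (1,true); (2,true); (3,true); (4,true); (5,true); (6,false); (7,false); (8,true)];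
  [(0,true); (1,true); (2,true); (3,true); (4,true); (5,true); (6,false); (7,true); (8,false)];
  [(0,true); (1,true); (2,true); (3,true); (4,true); (5,true); (6,true); (7,false); (8,false)];
  [(0,true); (1,true); (2,true); (3,true); (4,true); (5,true); (6,true); (7,true); (8,true)];
  [(0,true); (2,false)];
  [(0,true); (4,false)];
  [(0,true); (5,false)];
  [(0,true); (7,false)];
  [(0,true); (8,false)];
  [(1,false); (2,false)];
  [(1,false); (3,true)];
  [(1,false); (4,true)];
  [(1,false); (6,true)];
  [(1,false); (7,true)];
  [(1,false); (8,true)];
  [(1,true); (2,false)];
  [(1,true); (5,false)];
  [(1,true); (6,false)];
  [(2,false); (3,true)];
  [(2,false); (4,true)];
  [(2,false); (5,true)];
  [(2,false); (6,true)];
  [(2,false); (7,true)];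
  [(2,false); (8,true)];
  [(2,true); (4,false)];
  [(2,true); (5,false)];
  [(2,true); (7,false)];
  [(2,true); (8,false)];
  [(3,false); (6,false)];
  [(3,false); (6,true)];
  [(3,true); (4,false)];
  [(3,true); (5,false)];
  [(3,true); (7,false)];
  [(3,true); (8,false)];
  [(4,false); (7,false)];
  [(4,false); (7,true)];
  [(4,false); (8,true)];
  [(4,true); (5,false)];
  [(4,true); (6,false)];
  [(5,false); (6,true)];
  [(5,false); (7,true)];
  [(5,false); (8,true)];
  [(6,true); (7,false)];
  [(6,true); (8,false)];
  [(7,false); (8,true)]])%nat
  ([[0; 0; 0; 47421];
  [0; 0; 0; 40250];
  [0; 0; 0; 37655];
  [0; 0; 0; 35291];
  [0; 0; 0; 34478];
  [0; 0; 0; 33489];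
  [0; 0; 0; 33489];
  [0; 0; 0; 33489];
  [0; 0; 0; 2282455];
  [0; 0; 0; 2339753];
  [125405711; 0; 0; 0];
  [0; 0; 0; 33896];
  [0; 0; 0; 33091];
  [0; 0; 0; 31710];
  [0; 0; 0; 31235];
  [0; 0; 0; 31238];
  [0; 0; 0; 31238];
  [0; 0; 0; 31238];
  [0; 0; 0; 2167766];
  [0; 0; 0; 29951];
  [0; 0; 0; 30094];
  [0; 0; 0; 30143];
  [0; 0; 0; 29622];
  [0; 0; 0; 29622];
  [0; 0; 0; 29622];
  [0; 0; 0; 29551];
  [0; 0; 0; 29338];
  [0; 0; 0; 29079];
  [0; 0; 0; 29079];
  [0; 0; 0; 29079];
  [0; 0; 0; 28719];
  [0; 0; 0; 28460];
  [0; 0; 0; 28460];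
  [0; 0; 0; 28460];
  [0; 0; 0; 28247];
  [0; 0; 0; 28247];
  [0; 0; 0; 28247];
  [0; 0; 0; 27988];
  [0; 0; 0; 27988];
  [0; 0; 0; 27988];
  [0; 0; 0; 2970];
  [0; 0; 0; 2253523];
  [0; 0; 0; 2314965];
  [0; 0; 0; 2326149];
  [0; 0; 0; 2339753];
  [0; 0; 0; 2339753];
  [53567959; 0; 0; 0];
  [0; 0; 0; 2545701];
  [0; 0; 0; 2630149];
  [0; 0; 0; 1750053];
  [0; 0; 0; 2725243];
  [0; 0; 0; 2725243];
  [0; 0; 0; 2422129];
  [0; 0; 0; 2659200];
  [0; 0; 0; 975190];
  [0; 0; 0; 2659836];
  [0; 0; 0; 1282099];
  [0; 0; 0; 758538];
  [0; 0; 0; 2995437];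
  [0; 0; 0; 1291703];
  [0; 0; 0; 2257542];
  [0; 0; 0; 1592353];
  [0; 0; 0; 2189745];
  [0; 0; 0; 1703734];
  [0; 0; 0; 737895];
  [173820344; 0; 0; 0];
  [0; 0; 0; 3102296];
  [0; 0; 0; 2972794];
  [0; 0; 0; 3035896];
  [0; 0; 0; 3102296];
  [0; 0; 0; 3102296];
  [87003101; 0; 0; 0];
  [0; 0; 0; 3240506];
  [0; 0; 0; 3240506];
  [0; 0; 0; 3158201];
  [0; 0; 0; 3240506];
  [0; 0; 0; 3295092];
  [0; 0; 0; 3295092];
  [0; 0; 0; 3295092];
  [0; 0; 0; 3361491];
  [0; 0; 0; 3361491];
  [0; 0; 0; 3301117]])%Z.

Theorem mainTheorem13 (delta : R) (hdelta : 0 < delta) :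
  (exists G1 : game, well_formed G1 /\ unweighted G1 /\ poly_latencies 2 G1 /\
     exists p, is_PoS G1 p /\ 21859 / 10000 - delta <= p) /\
  (exists G2 : game, well_formed G2 /\ unweighted G2 /\ poly_latencies 3 G2 /\
     exists p, is_PoS G2 p /\ 27558 / 10000 - delta <= p).
Proof.
  split.
  - exists (G_of D2). split; [apply G_wf|]. split; [apply G_unw|].
    split; [apply (G_poly D2); exact (@eq_refl bool true <: coef_check D2 = true)|].
    assert (HZ : (21859 * sumZ D2 (repeat false (dn D2)) <= 10000 * sumZ D2 (repeat true (dn D2)))%Z).
    { apply Z.leb_le. exact (@eq_refl bool true <: Z.leb (21859 * sumZ D2 (repeat false (dn D2))) (10000 * sumZ D2 (repeat true (dn D2))) = true). }
    apply IZR_le in HZ. rewrite !mult_IZR in HZ.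
    destruct (framework D2 (21859 / 10000)) as [p [Hp Hr]].
    + exact (@eq_refl bool true <: dom_check D2 = true).
    + exact (@eq_refl bool true <: coef_check D2 = true).
    + exact (@eq_refl bool true <: pos0_check D2 = true).
    + apply Nat.ltb_lt; exact (@eq_refl bool true <: (0 <? dn D2)%nat = true).
    + lra.
    + lra.
    + exists p. split; [exact Hp|lra].
  - exists (G_of D3). split; [apply G_wf|]. split; [apply G_unw|].
    split; [apply (G_poly D3); exact (@eq_refl bool true <: coef_check D3 = true)|].
    assert (HZ : (27558 * sumZ D3 (repeat false (dn D3)) <= 10000 * sumZ D3 (repeat true (dn D3)))%Z).
    { apply Z.leb_le. exact (@eq_refl bool true <: Z.leb (27558 * sumZ D3 (repeat false (dn D3))) (10000 * sumZ D3 (repeat true (dn D3))) = true). }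
    apply IZR_le in HZ. rewrite !mult_IZR in HZ.
    destruct (framework D3 (27558 / 10000)) as [p [Hp Hr]].
    + exact (@eq_refl bool true <: dom_check D3 = true).
    + exact (@eq_refl bool true <: coef_check D3 = true).
    + exact (@eq_refl bool true <: pos0_check D3 = true).
    + apply Nat.ltb_lt; exact (@eq_refl bool true <: (0 <? dn D3)%nat = true).
    + lra.
    + lra.
    + exists p. split; [exact Hp|lra].
Qed.
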